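(* Let $G$ and $H$ be groups and let $f:G\to H$ be a quasimorphism, i.e. a function whose defect set $D(f)=\{f(y)^{-1}f(x)^{-1}f(xy)\mid x,y\in G\}$ is finite. Suppose $f$ is symmetric ($f(x^{-1})=f(x)^{-1}$ for all $x\in G$) and unital ($f(e_G)=e_H$). If $\Xi$ is an approximate subgroup of $G$, then $f(\Xi)$ is an approximate subgroup of $H$.
   Context: A subset $\Lambda$ of a group $G$ is an approximate subgroup if $\Lambda=\Lambda^{-1}$, $e\in\Lambda$, and there exists a finite subset $F\subset G$ such that $\Lambda^2=\{ab\mid a,b\in\Lambda\}\subseteq\Lambda F$. *)

(* Defs.v *)
(* groups are MathComp's (possibly infinite) [groupType]
   from boot/monoid.v; subsets are predicates [G -> Prop]. *)
From HB Require Import structures.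
From mathcomp Require Import all_boot.
Set Implicit Arguments. Unset Strict Implicit. Unset Printing Implicit Defensive.
Local Open Scope group_scope.

Definition approx_subgroup (G : groupType) (L : G -> Prop) : Prop :=
  (forall x : G, L x <-> L x^-1) /\ L 1 /\
  exists F : seq G, forall a b : G, L a -> L b ->
    exists l f : G, [/\ L l, f \in F & a * b = l * f].

Definition defect_set (G H : groupType) (f : G -> H) : H -> Prop :=
  fun h => exists x y : G, h = (f y)^-1 * (f x)^-1 * f (x * y).

Definition finite_subset (T : eqType) (A : T -> Prop) : Prop :=
  exists s : seq T, forall t, A t -> t \in s.

Definition quasimorphism (G H : groupType) (f : G -> H) : Prop :=
  finite_subset (defect_set f).

Definition img_set (G H : Type) (f : G -> H) (A : G -> Prop) : H -> Prop :=
  fun h => exists2 x, A x & f x = h.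

(* Main.v *)
Require Import Defs.
From HB Require Import structures.
From mathcomp Require Import all_boot.
Local Open Scope group_scope.

Theorem proposition3p17 (G H : groupType) (f : G -> H)
  (hqm : quasimorphism f)
  (hsym : forall x : G, f x^-1 = (f x)^-1)
  (hunit : f 1 = 1)
  (Xi : G -> Prop) (hXi : approx_subgroup Xi) :
  approx_subgroup (img_set f Xi).
Proof.
case: hXi => [Hinv [H1 [F HF]]].
case: hqm => s Hs.
split.
  move=> h; split.
    by case=> x Hx <-; exists x^-1; [apply/(Hinv x) | rewrite hsym].
  case=> x Hx Hfx; exists x^-1; first by apply/(Hinv x).
  by rewrite hsym Hfx invgK.
split; first by exists 1.
exists [seq x * y^-1 | x <- [seq f c * d | c <- F, d <- s], y <- s].
move=> _ _ [a Ha <-] [b Hb <-].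
have [l [c [Hl Hc Hab]]] := HF a b Ha Hb.
exists (f l), (f c * ((f c)^-1 * (f l)^-1 * f (l * c)) * ((f b)^-1 * (f a)^-1 * f (a * b))^-1).
split.
- by exists l.
- apply: allpairs_f; last by apply: Hs; exists a, b.
  apply: allpairs_f => //; apply: Hs; exists l, c => //.
- rewrite -Hab !invgM !invgK !mulgA !mulgK mulgV mul1g.
  done.
Qed.
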